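(* Fix $0<\varepsilon<\frac1{10}$. Let $n$ be a positive integer, $m=\lceil n/\log^8 n\rceil$, and let $\pi_R,\pi_B:[n]\to[m]$ be independent uniformly random functions. Let $s=\lceil\varepsilon n\rceil$ and let $\mathcal E(\varepsilon)$ be the event that for every $s$-pairing $P$ in $[n]$, at least one of $\pi_R,\pi_B$ is $\varepsilon$-respectful of $P$. Then $\mathcal E(\varepsilon)$ holds with probability tending to $1$ as $n\to\infty$.
   Context: Logarithms are natural. An $s$-pairing in $[n]$ is a collection $\{(u_1,v_1),\dots,(u_s,v_s)\}$ of pairs where $u_1,\dots,u_s,v_1,\dots,v_s$ are distinct elements of $[n]$. A map $\pi:[n]\to[m]$ is $\varepsilon$-respectful of such a pairing if there is $I\subseteq[s]$ with $|I|\geq\varepsilon s$ such that $\pi(u_i)\neq\pi(v_i)$ for all $i\in I$ and the unordered pairs $\{\pi(u_i),\pi(v_i)\}$, $i\in I$, are pairwise distinct. *)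

(* Defs.v *)
From HB Require Import structures.
From mathcomp Require Import all_boot all_order all_algebra.
From mathcomp Require Import all_classical all_reals all_analysis.
Set Implicit Arguments. Unset Strict Implicit. Unset Printing Implicit Defensive.
Import Order.TTheory GRing.Theory Num.Theory.
Local Open Scope ring_scope.

Definition mval (R : realType) (n : nat) : nat :=
  `|Num.ceil ((n%:R : R) / (ln (n%:R : R)) ^+ 8)|%N.

Definition sval (R : realType) (eps : R) (n : nat) : nat :=
  `|Num.ceil (eps * n%:R)|%N.

(* An s-pairing {(u_1,v_1),...,(u_s,v_s)} in [n] = 'I_n, given by the
   two maps i |-> u_i and i |-> v_i, with all 2s elements distinct. *)
Definition is_pairing (n s : nat) (u v : 'I_s -> 'I_n) : bool :=
  [&& injectiveb u, injectiveb v & [forall i, forall j, u i != v j]].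

Definition respectful (R : realType) (eps : R) (n m s : nat)
  (pi : 'I_n -> 'I_m) (u v : 'I_s -> 'I_n) : bool :=
  [exists I : {set 'I_s},
    [&& eps * s%:R <= (#|I|%:R : R),
        [forall i in I, pi (u i) != pi (v i)] &
        [forall i in I, forall j in I,
           (i != j) ==> ([set pi (u i); pi (v i)] != [set pi (u j); pi (v j)])]]].

Definition eventE (R : realType) (eps : R) (n m s : nat)
  (piR piB : {ffun 'I_n -> 'I_m}) : bool :=
  [forall u : {ffun 'I_s -> 'I_n}, forall v : {ffun 'I_s -> 'I_n},
     is_pairing u v ==> (respectful eps piR u v || respectful eps piB u v)].

(* Probability of E(eps) when (pi_R, pi_B) is uniform on pairs of maps
   [n] -> [m] (i.e. pi_R, pi_B independent and uniform). *)
Definition probE (R : realType) (eps : R) (n : nat) : R :=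
  let m := mval R n in
  let s := sval eps n in
  (#|[pred p : {ffun 'I_n -> 'I_m} * {ffun 'I_n -> 'I_m} | eventE eps s p.1 p.2]|%:R
   / #|{: {ffun 'I_n -> 'I_m} * {ffun 'I_n -> 'I_m}}|%:R).

(* Main.v *)
Require Import Defs.
From HB Require Import structures.
From mathcomp Require Import all_boot all_order all_algebra.
From mathcomp Require Import all_classical all_reals all_analysis.
From mathcomp Require Import fingroup perm.
From mathcomp Require Import zify ring.
Set Implicit Arguments. Unset Strict Implicit. Unset Printing Implicit Defensive.
Import Order.TTheory GRing.Theory Num.Theory.
Import numFieldNormedType.Exports.

Lemma prod_count (T : finType) (m s : nat) (u v : 'I_s -> T)
    (A : {set 'I_m * 'I_m}) :
  0 < m -> injective u -> injective v -> (forall i j, u i != v j) ->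
  #|[set f : {ffun T -> 'I_m} | [forall i, (f (u i), f (v i)) \in A]]| * (m * m)^s
    <= #|A|^s * m ^ #|T|.
Proof.
move=> hm iu iv duv.
pose z : 'I_m := Ordinal hm.
pose S := [set f : {ffun T -> 'I_m} | [forall i, (f (u i), f (v i)) \in A]].
pose Z := [set f : {ffun T -> 'I_m} | [forall i, (f (u i) == z) && (f (v i) == z)]].
pose W := [set w : {ffun 'I_s -> 'I_m * 'I_m} | w \in ffun_on (mem A)].
pose Phi (f : {ffun T -> 'I_m}) :=
  ([ffun x => if [exists i, u i == x] || [exists i, v i == x] then z else f x],
   [ffun i => (f (u i), f (v i))]).
pose Psi (p : {ffun T -> 'I_m} * {ffun 'I_s -> 'I_m * 'I_m}) : {ffun T -> 'I_m} :=
  [ffun x => if [pick i | u i == x] is Some i then (p.2 i).1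
             else if [pick i | v i == x] is Some i then (p.2 i).2 else p.1 x].
have PsiPhi : forall f, Psi (Phi f) = f.
  move=> f; apply/ffunP => x; rewrite !ffunE /=.
  case: pickP => [i /eqP <-|hu]; first by rewrite ?ffunE.
  case: pickP => [i /eqP <-|hv]; first by rewrite ?ffunE.
  rewrite ?ffunE.
  have -> : [exists i, u i == x] = false by apply/existsP => -[i]; rewrite hu.
  by have -> : [exists i, v i == x] = false by apply/existsP => -[i]; rewrite hv.
have h1 : #|S| <= #|Z| * #|W|.
  rewrite -cardsX.
  have <- : #|Phi @: S| = #|S|.
    apply: card_in_imset => f g _ _ e.
    by rewrite -(PsiPhi f) -(PsiPhi g) e.
  apply: subset_leq_card; apply/fintype.subsetP => p /imsetP [f fS ->].
  rewrite inE /=; apply/andP; split.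
    rewrite inE; apply/forallP => i; rewrite !ffunE.
    have -> : [exists j, u j == u i] by apply/existsP; exists i.
    have -> : [exists j, v j == v i] by apply/existsP; exists i.
    by rewrite /= ?orbT ?eqxx.
  rewrite inE; apply/ffun_onP => i; rewrite ffunE.
  by move: fS; rewrite inE => /forallP.
have h2 : #|Z| * (m * m) ^ s <= m ^ #|T|.
  have -> : (m * m) ^ s = #|[set: {ffun 'I_s -> 'I_m * 'I_m}]|.
    by rewrite cardsT card_ffun card_prod !card_ord.
  rewrite -cardsX; have -> : m ^ #|T| = #|{ffun T -> 'I_m}| by rewrite card_ffun card_ord.
  have <- : #|Psi @: finset.setX Z [set: {ffun 'I_s -> 'I_m * 'I_m}]| =
            #|finset.setX Z [set: {ffun 'I_s -> 'I_m * 'I_m}]|.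
    apply: card_in_imset => -[f w] [g w'].
    rewrite !inE /= !andbT => /forallP fZ /forallP gZ e.
    have ew : w = w'.
      apply/ffunP => i.
      have eu := congr1 (fun h : {ffun T -> 'I_m} => h (u i)) e.
      have ev := congr1 (fun h : {ffun T -> 'I_m} => h (v i)) e.
      move: eu ev; rewrite /Psi !ffunE /=.
      case: pickP => [j /eqP hj | ]; last by move/(_ i); rewrite eqxx.
      have ji := iu _ _ hj; subst j.
      case: pickP => [j /eqP hj2 | _]; first by move: (duv j i); rewrite hj2 eqxx.
      case: pickP => [j /eqP hj3 | ]; last by move/(_ i); rewrite eqxx.
      have ji2 := iv _ _ hj3; subst j.
      by case: (w i) => a b; case: (w' i) => c d /= -> ->.
    subst w'; congr pair; apply/ffunP => x.
    have ex := congr1 (fun h : {ffun T -> 'I_m} => h x) e.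
    move: ex; rewrite /Psi !ffunE /=.
    case: pickP => [j /eqP <- _ | hu].
      by move: (fZ j) (gZ j) => /andP [/eqP -> _] /andP [/eqP -> _].
    case: pickP => [j /eqP <- _ | hv] //.
    by move: (fZ j) (gZ j) => /andP [_ /eqP ->] /andP [_ /eqP ->].
  exact: max_card.
have hW : #|W| = #|A| ^ s.
  by rewrite (eq_card (B := ffun_on (mem A))) ?card_ffun_on ?card_ord // => w; rewrite inE.
rewrite -hW.
apply: (leq_trans (leq_mul h1 (leqnn _))).
by rewrite mulnAC mulnC leq_mul2l h2 orbT.
Qed.

Lemma set2_eq (T : finType) (a b c d : T) :
  a != b -> [set a; b] = [set c; d] -> (a = c /\ b = d) \/ (a = d /\ b = c).
Proof.
move=> ab e.
have ha : a \in [set c; d] by rewrite -e !inE eqxx.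
have hb : b \in [set c; d] by rewrite -e !inE eqxx orbT.
move: ha hb; rewrite !inE => /orP [/eqP ac | /eqP ad] /orP [/eqP bc | /eqP bd].
- by move: ab; rewrite ac bc eqxx.
- by left.
- by right.
- by move: ab; rewrite ad bd eqxx.
Qed.

Lemma seq_in_codom (X : finType) (K : nat) (x0 : X) (l : seq X) :
  size l <= K -> exists t : {ffun 'I_K -> X}, {subset l <= codom t}.
Proof.
move=> hl; exists [ffun k : 'I_K => nth x0 l k] => x xl.
have hi : index x l < K by apply: leq_trans hl; rewrite index_mem.
apply/codomP; exists (Ordinal hi); by rewrite ffunE /= nth_index.
Qed.

Definition Aset (m K : nat) (t : {ffun 'I_K -> 'I_m * 'I_m}) : {set 'I_m * 'I_m} :=
  [set p | (p.1 == p.2) || (p \in codom t) || ((p.2, p.1) \in codom t)].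

Lemma card_Aset (m K : nat) (t : {ffun 'I_K -> 'I_m * 'I_m}) :
  #|Aset t| <= m + K + K.
Proof.
have sub : Aset t \subset [set (x, x) | x : 'I_m] :|: [set t k | k : 'I_K]
                          :|: [set ((t k).2, (t k).1) | k : 'I_K].
  apply/fintype.subsetP => -[a b]; rewrite !inE /= => /orP [/orP [/eqP ab | /codomP [k hk]] | /codomP [k hk]].
  - by subst b; rewrite -orbA; apply/orP; left; apply/imsetP; exists a.
  - by apply/orP; left; apply/orP; right; apply/imsetP; exists k.
  - by apply/orP; right; apply/imsetP; exists k => //; rewrite -hk.
apply: leq_trans (subset_leq_card sub) _.
apply: leq_trans (leq_card_setU _ _) _; apply: leq_add; last first.
  by apply: leq_trans (leq_imset_card _ _) _; rewrite card_ord.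
apply: leq_trans (leq_card_setU _ _) _; apply: leq_add.
  by apply: leq_trans (leq_imset_card _ _) _; rewrite card_ord.
by apply: leq_trans (leq_imset_card _ _) _; rewrite card_ord.
Qed.

Lemma nonresp_struct (R : realType) (eps : R) (n m s K : nat)
    (pi : 'I_n -> 'I_m) (u v : 'I_s -> 'I_n) :
  0 < m -> (forall k : nat, (k%:R < eps * s%:R)%R -> k <= K) ->
  ~~ respectful eps pi u v ->
  exists t : {ffun 'I_K -> 'I_m * 'I_m}, forall i, (pi (u i), pi (v i)) \in Aset t.
Proof.
move=> hm hK nr.
pose edge j := [set pi (u j); pi (v j)].
pose NL j := pi (u j) != pi (v j).
pose I := [set i | NL i && [forall j : 'I_s, (val j < val i)%N ==> NL j ==> (edge j != edge i)]].
have hI1 : [forall i in I, pi (u i) != pi (v i)].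
  by apply/forall_inP => i; rewrite inE => /andP [].
have hI2 : [forall i in I, forall j in I, (i != j) ==> (edge i != edge j)].
  apply/forall_inP => i iI; apply/forall_inP => j jI; apply/implyP => ij.
  move: iI jI; rewrite !inE => /andP [NLi /forallP Hi] /andP [NLj /forallP Hj].
  case: (ltngtP i j) => [lt | gt | eq].
  - by move: (Hj i); rewrite lt NLi.
  - by move: (Hi j); rewrite gt NLj eq_sym.
  - by move: ij; rewrite (val_inj eq) eqxx.
have cI : #|I| <= K.
  apply: hK; rewrite ltNge; apply/negP => le; move/negP: nr; apply.
  by apply/existsP; exists I; rewrite le hI1 hI2.
have szl : size [seq (pi (u j), pi (v j)) | j <- enum I] <= K.
  by rewrite size_map -cardE.
have [t ht] := seq_in_codom (Ordinal hm, Ordinal hm) szl.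
exists t => i; rewrite inE /=.
case: (boolP (NL i)) => [NLi | ]; last by rewrite negbK => ->.
pose P j := NL j && (edge j == edge i).
have Pi : P i by rewrite /P NLi eqxx.
case: (arg_minnP (fun j : 'I_s => val j) Pi) => j /andP [NLj /eqP ej] minj.
have jI : j \in I.
  rewrite inE NLj /=; apply/forallP => k; apply/implyP => kj; apply/implyP => NLk.
  apply/negP => /eqP ek.
  have : P k by rewrite /P NLk ek ej eqxx.
  by move/minj; rewrite leqNgt kj.
have inl : (pi (u j), pi (v j)) \in [seq (pi (u j), pi (v j)) | j <- enum I].
  by apply/mapP; exists j; rewrite ?mem_enum.
have := ht _ inl.
case: (set2_eq NLj ej) => -[-> ->] ->; first by rewrite orbT.
by rewrite orbT.
Qed.

Lemma card_le_sum (X Y : finType) (A : {set X}) (S : Y -> {set X}) :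
  (forall x, x \in A -> exists t, x \in S t) -> #|A| <= \sum_t #|S t|.
Proof.
move=> hA.
rewrite -sum1_card.
have e : forall t, #|S t| = \sum_x (x \in S t : nat).
  by move=> t; rewrite -sum1_card big_mkcond /=; apply: eq_bigr => x _; case: (x \in S t).
rewrite (eq_bigr _ (fun t _ => e t)) exchange_big /=.
rewrite [X in _ <= X](bigID (mem A)) /=; apply: leq_trans (leq_addr _ _).
apply: leq_sum => x xA.
have [t xt] := hA x xA.
by rewrite (bigD1 t) //= xt.
Qed.

Lemma leq_exp_base (a b e : nat) : a <= b -> a ^ e <= b ^ e.
Proof. by move=> ab; elim: e => [|e IH]; rewrite ?expn0 // !expnS leq_mul. Qed.

Definition Sset (n m s K : nat) (u v : 'I_s -> 'I_n) (t : {ffun 'I_K -> 'I_m * 'I_m}) :=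
  [set f : {ffun 'I_n -> 'I_m} | [forall i, (f (u i), f (v i)) \in Aset t]].

Lemma nonresp_count (R : realType) (eps : R) (n m s K : nat) (u v : 'I_s -> 'I_n) :
  0 < m -> injective u -> injective v -> (forall i j, u i != v j) ->
  (forall k : nat, (k%:R < eps * s%:R)%R -> k <= K) ->
  #|[set pi : {ffun 'I_n -> 'I_m} | ~~ respectful eps pi u v]| * (m * m) ^ s
    <= (m * m) ^ K * ((m + K + K) ^ s * m ^ n).
Proof.
move=> hm iu iv duv hK.
have h1 : #|[set pi : {ffun 'I_n -> 'I_m} | ~~ respectful eps pi u v]|
          <= \sum_(t : {ffun 'I_K -> 'I_m * 'I_m}) #|Sset u v t|.
  apply: card_le_sum => pi; rewrite inE => nr.
  have [t ht] := nonresp_struct hm hK nr.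
  by exists t; rewrite inE; apply/forallP.
apply: leq_trans (leq_mul h1 (leqnn _)) _.
rewrite big_distrl /=.
apply: (@leq_trans (\sum_(t : {ffun 'I_K -> 'I_m * 'I_m}) ((m + K + K) ^ s * m ^ n))).
  apply: leq_sum => t _; apply: leq_trans (prod_count (Aset t) hm iu iv duv) _.
  by rewrite card_ord leq_mul2r leq_exp_base ?card_Aset ?orbT.
by rewrite sum_nat_const card_ffun card_prod !card_ord.
Qed.

Lemma resp_perm (R : realType) (eps : R) (n m s : nat) (pi : 'I_n -> 'I_m)
   (u v u' v' : 'I_s -> 'I_n) (sg : {perm 'I_s}) :
  u' =1 (fun i => u (sg i)) -> v' =1 (fun i => v (sg i)) ->
  respectful eps pi u' v' -> respectful eps pi u v.
Proof.
move=> eu ev /existsP [I /and3P [cI h1 h2]].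
apply/existsP; exists (sg @: I); apply/and3P; split.
- by rewrite card_imset //; exact: perm_inj.
- apply/forall_inP => x /imsetP [i iI ->].
  by move/forall_inP: h1 => /(_ i iI); rewrite eu ev.
- apply/forall_inP => x /imsetP [i iI ->]; apply/forall_inP => y /imsetP [j jI ->].
  apply/implyP => ne.
  move/forall_inP: h2 => /(_ i iI) /forall_inP /(_ j jI) /implyP.
  rewrite !eu !ev; apply; apply: contra ne => /eqP ->; by [].
Qed.

Lemma pairing_perm (n s : nat) (u v : 'I_s -> 'I_n) (sg : {perm 'I_s}) :
  is_pairing u v -> is_pairing [ffun i => u (sg i)] [ffun i => v (sg i)].
Proof.
case/and3P => /injectiveP iu /injectiveP iv /forallP d.
apply/and3P; split.
- by apply/injectiveP => i j; rewrite !ffunE => /iu /perm_inj.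
- by apply/injectiveP => i j; rewrite !ffunE => /iv /perm_inj.
- apply/forallP => i; apply/forallP => j; rewrite !ffunE.
  by move/forallP: (d (sg i)) => /(_ (sg j)).
Qed.

Definition NRset (R : realType) (eps : R) (n m s : nat)
  (q : {ffun 'I_s -> 'I_n} * {ffun 'I_s -> 'I_n}) :=
  [set pi : {ffun 'I_n -> 'I_m} | ~~ respectful eps pi q.1 q.2].

Lemma fail_count (R : realType) (eps : R) (n m s K : nat) :
  0 < n -> 0 < m -> (forall k : nat, (k%:R < eps * s%:R)%R -> k <= K) ->
  #|[set p : {ffun 'I_n -> 'I_m} * {ffun 'I_n -> 'I_m} | ~~ eventE eps s p.1 p.2]|
     * s`! * ((m * m) ^ s) ^ 2
   <= (n ^ s) ^ 2 * ((m * m) ^ K * ((m + K + K) ^ s * m ^ n)) ^ 2.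
Proof.
move=> hn hm hK.
set F := [set p : {ffun 'I_n -> 'I_m} * {ffun 'I_n -> 'I_m} | ~~ eventE eps s p.1 p.2].
set C := (m * m) ^ K * ((m + K + K) ^ s * m ^ n).
pose NR := @NRset R eps n m s.
pose Wset := [set x : ({ffun 'I_n -> 'I_m} * {ffun 'I_n -> 'I_m}) *
                      ({ffun 'I_s -> 'I_n} * {ffun 'I_s -> 'I_n}) |
               [&& is_pairing x.2.1 x.2.2, x.1.1 \in NR x.2 & x.1.2 \in NR x.2]].
pose u0 : {ffun 'I_s -> 'I_n} := [ffun => Ordinal hn].
pose P (p : {ffun 'I_n -> 'I_m} * {ffun 'I_n -> 'I_m})
       (q : {ffun 'I_s -> 'I_n} * {ffun 'I_s -> 'I_n}) :=
  is_pairing q.1 q.2 && ~~ (respectful eps p.1 q.1 q.2 || respectful eps p.2 q.1 q.2).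
pose wit p := odflt (u0, u0) [pick q | P p q].
have witP : forall p, p \in F -> P p (wit p).
  move=> p; rewrite inE => /forallPn [u] /forallPn [v]; rewrite negb_imply => huv.
  rewrite /wit; case: pickP => [q -> //|h].
  by move: (h (u, v)); rewrite /P /= huv.
pose G (x : ({ffun 'I_n -> 'I_m} * {ffun 'I_n -> 'I_m}) * {perm 'I_s}) :=
  (x.1, ([ffun i => (wit x.1).1 (x.2 i)], [ffun i => (wit x.1).2 (x.2 i)])).
have step1 : #|F| * s`! <= #|Wset|.
  have -> : #|F| * s`! = #|finset.setX F [set: {perm 'I_s}]|.
    by rewrite cardsX cardsT card_Sn.
  rewrite -(card_in_imset (f := G)); last first.
    move=> [p sg] [p' sg']; rewrite finset.in_setX /= => /andP [pF _] _ [ep e1 _].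
    subst p'; congr pair; apply/permP => i.
    have := witP p pF; rewrite /P => /andP [/and3P [/injectiveP iu _ _] _].
    apply: iu.
    by have := congr1 (fun f : {ffun 'I_s -> 'I_n} => f i) e1; rewrite !ffunE.
  apply: subset_leq_card; apply/fintype.subsetP => x /imsetP [[p sg]].
  rewrite finset.in_setX /= => /andP [pF _] ->.
  have := witP p pF; rewrite /P => /andP [pr nr].
  rewrite negb_or in nr; case/andP: nr => nr1 nr2.
  rewrite inE /= pairing_perm //= !inE.
  apply/andP; split.
    by apply: contra nr1; apply: resp_perm => i; rewrite ffunE.
  by apply: contra nr2; apply: resp_perm => i; rewrite ffunE.
pose S (q : {ffun 'I_s -> 'I_n} * {ffun 'I_s -> 'I_n}) :=
  if is_pairing q.1 q.2 then [set (p, q) | p in finset.setX (NR q) (NR q)] else finset.set0.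
have step2 : #|Wset| <= \sum_q #|S q|.
  apply: card_le_sum => x; rewrite inE => /and3P [pr h1 h2].
  exists x.2; rewrite /S pr; apply/imsetP; exists x.1; first by rewrite inE h1 h2.
  by case: x {pr h1 h2}.
have step3 : forall q, #|S q| * ((m * m) ^ s) ^ 2 <= C ^ 2.
  move=> q; rewrite /S; case: ifP => pr; last by rewrite cards0.
  apply: leq_trans (leq_mul (leq_imset_card _ _) (leqnn _)) _.
  rewrite cardsX.
  have -> : #|NR q| * #|NR q| * ((m * m) ^ s) ^ 2 = (#|NR q| * (m * m) ^ s) ^ 2.
    set a := #|NR q|; set b := (m * m) ^ s; by rewrite expnMn mulnn.
  apply: leq_exp_base.
  move: pr => /and3P [/injectiveP iu /injectiveP iv /forallP d].
  exact: (@nonresp_count R eps n m s K q.1 q.2 hm iu iv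
            (fun i j => (forallP (d i)) j) hK).
apply: (@leq_trans (#|Wset| * ((m * m) ^ s) ^ 2)); first by rewrite leq_mul2r step1 orbT.
apply: (@leq_trans ((\sum_q #|S q|) * ((m * m) ^ s) ^ 2)); first by rewrite leq_mul2r step2 orbT.
rewrite big_distrl /=.
apply: (@leq_trans (\sum_(q : {ffun 'I_s -> 'I_n} * {ffun 'I_s -> 'I_n}) C ^ 2)).
  by apply: leq_sum => q _; exact: step3.
by rewrite sum_nat_const card_prod !card_ffun !card_ord mulnn.
Qed.
Lemma fact_sq (s : nat) : s ^ s <= (s`!) ^ 2.
Proof.
have e1 : s`! = \prod_(i < s) i.+1.
  by rewrite fact_prod big_add1 /= big_mkord.
have e2 : s`! = \prod_(i < s) (s - i).
  rewrite e1 (reindex_inj rev_ord_inj) /=.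
  by apply: eq_bigr => i _; rewrite subnSK.
rewrite expnS expn1 {1}e1 e2 -big_split /=.
have -> : s ^ s = \prod_(i < s) s by rewrite prod_nat_const card_ord.
apply: leq_prod => i _.
have := ltn_ord i; move: (nat_of_ord i) => k hk.
nia.
Qed.

Lemma t1 s : s ^ (s * 5) <= s`! ^ 10.
Proof.
rewrite expnM.
have -> : s`! ^ 10 = (s`! ^ 2) ^ 5 by rewrite -expnM.
apply: leq_exp_base. exact: fact_sq.
Qed.
Lemma t2 m K s : 0 < m -> 10 * K <= s -> m ^ (4 * K * 10) <= m ^ (4 * s).
Proof. move=> hm hK. apply: leq_pexp2l => //. lia. Qed.
Lemma nat_main (n m s K F : nat) :
  0 < m -> 10 * K <= s -> m + K + K <= 2 * n ->
  F * s`! * ((m * m) ^ s) ^ 2 <= (n ^ s) ^ 2 * ((m * m) ^ K * ((m + K + K) ^ s * m ^ n)) ^ 2 ->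
  F ^ 10 * (s ^ 5 * m ^ 36) ^ s <= ((2 * n) ^ 20 * n ^ 20) ^ s * ((m ^ n) ^ 2) ^ 10.
Proof.
move=> hm hK hmK H.
have H1 : F * s`! * m ^ (4 * s) <= n ^ (2 * s) * m ^ (4 * K) * (m + K + K) ^ (2 * s) * m ^ (2 * n).
  move: H; rewrite !expnMn -!expnM -!expnD.
  have -> : s * 2 + s * 2 = 4 * s by lia.
  have -> : K * 2 + K * 2 = 4 * K by lia.
  by rewrite !mulnA (mulnC s 2) (mulnC n 2).
have H2 := @leq_exp_base _ _ 10 H1.
rewrite !expnMn -!expnM in H2.
have f1 := t1 s.
have f2 := @t2 m K s hm hK.
have f3 : (m + K + K) ^ (2 * s * 10) <= (2 * n) ^ (2 * s * 10) by apply: leq_exp_base.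
have H3 : F ^ 10 * s ^ (s * 5) * m ^ (36 * s) * m ^ (4 * s) <=
          n ^ (2 * s * 10) * (2 * n) ^ (2 * s * 10) * m ^ (2 * n * 10) * m ^ (4 * s).
  apply: leq_trans (leq_trans _ H2) _.
    rewrite -mulnA -expnD (_ : 36 * s + 4 * s = 4 * s * 10); last by lia.
    by rewrite leq_mul2r leq_mul2l f1 !orbT.
  have := leq_mul (leq_mul (leq_mul (leqnn (n ^ (2 * s * 10))) f2) f3) (leqnn (m ^ (2 * n * 10))).
  move/leq_trans; apply.
  apply: eq_leq; rewrite -!mulnA; congr (_ * _); rewrite mulnC -mulnA //.
rewrite leq_pmul2r in H3; last by rewrite expn_gt0 hm.
apply: leq_trans (leq_trans _ H3) _.
  by apply: eq_leq; rewrite expnMn -!expnM mulnA (mulnC 5 s).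
have e1 : ((2 * n) ^ 20 * n ^ 20) ^ s = n ^ (2 * s * 10) * (2 * n) ^ (2 * s * 10).
  rewrite (expnMn ((2 * n) ^ 20) (n ^ 20) s) -!expnM mulnC.
  by congr (_ ^ _ * _ ^ _); lia.
have e2 : ((m ^ n) ^ 2) ^ 10 = m ^ (2 * n * 10).
  by rewrite -!expnM; congr (_ ^ _); lia.
by rewrite e1 e2.
Qed.
Local Open Scope ring_scope.
Lemma pw (R : realType) (a b : R) (k : nat) : 0 <= a -> a <= b -> a ^+ k <= b ^+ k.
Proof. move=> a0 ab; apply: lerXn2r => //; rewrite nnegrE //; exact: le_trans ab. Qed.

Lemma ln_pow_bound (R : realType) (x : R) (k : nat) :
  1 <= x -> ln x ^+ k.+1 <= (k.+1)`!%:R * x.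
Proof.
move=> x1.
have x0 : 0 < x by apply: lt_le_trans x1.
have y0 := ln_ge0 x1.
have := expR_ge1Dxn k y0; rewrite lnK ?posrE //.
have f0 : 0 < (k.+1)`!%:R :> R by rewrite ltr0n fact_gt0.
move=> h; rewrite mulrC -ler_pdivrMr //.
apply: le_trans h; rewrite lerDr //.
Qed.

Definition Dc (R : realType) (c eps : R) : R := 2 ^+ 40 * c / eps ^+ 10.

Lemma real_key (R : realType) (c eps x s m L r : R) (sn : nat) :
  0 <= c -> 0 < eps -> 1 <= L -> 0 < x -> eps * x <= s -> x <= m * L -> 0 < m -> (1 <= sn)%N ->
  L ^+ 72 <= c * x -> Dc c eps <= x -> 0 <= r ->
  r ^+ 10 * (s ^+ 5 * m ^+ 36) ^+ sn <= ((2 * x) ^+ 20 * x ^+ 20) ^+ sn ->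
  r ^+ 20 <= Dc c eps / x.
Proof.
move=> c0 e0 L1 x0 hs hm m0 sn1 hL hD r0 H.
have L0 : 0 < L by apply: lt_le_trans L1.
have s0 : 0 < s by apply: lt_le_trans hs; rewrite mulr_gt0.
set P := s ^+ 5 * m ^+ 36.
set Q := (2 * x) ^+ 20 * x ^+ 20.
have P0 : 0 < P by rewrite mulr_gt0 // exprn_gt0.
have Q0 : 0 < Q by rewrite mulr_gt0 // exprn_gt0 // mulr_gt0.
set g := Q / P.
have g0 : 0 <= g by rewrite divr_ge0 // ltW.
have h1 : r ^+ 10 <= g ^+ sn.
  rewrite /g expr_div_n ler_pdivlMr ?exprn_gt0 //.
have h2 : g ^+ 2 * x <= Dc c eps.
  rewrite /g /Dc expr_div_n mulrAC ler_pdivrMr ?exprn_gt0 //.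
  have hPL : eps ^+ 5 * x ^+ 41 <= P * L ^+ 36.
    rewrite /P -mulrA -exprMn (_ : 41 = 5 + 36)%N // exprD mulrA -exprMn.
    apply: ler_pM.
    - by rewrite exprn_ge0 // mulr_ge0 // ltW.
    - by rewrite exprn_ge0 // ltW.
    - by apply: pw => //; rewrite mulr_ge0 // ltW.
    - by apply: pw => //; rewrite ltW.
  have hQ : Q ^+ 2 * x * L ^+ 72 <= 2 ^+ 40 * c * x ^+ 82.
    have -> : Q ^+ 2 * x = 2 ^+ 40 * x ^+ 81 by rewrite /Q; ring.
    have -> : 2 ^+ 40 * c * x ^+ 82 = 2 ^+ 40 * x ^+ 81 * (c * x) by ring.
    by apply: ler_wpM2l => //; rewrite mulr_ge0 // exprn_ge0 // ltW.
  rewrite -(ler_pM2r (exprn_gt0 72 L0)); apply: le_trans hQ _.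
  have e0' : eps != 0 by rewrite gt_eqF.
  have -> : 2 ^+ 40 * c / eps ^+ 10 * P ^+ 2 * L ^+ 72 =
            2 ^+ 40 * c / eps ^+ 10 * (P * L ^+ 36) ^+ 2.
    by ring.
  have -> : 2 ^+ 40 * c * x ^+ 82 =
            2 ^+ 40 * c / eps ^+ 10 * (eps ^+ 5 * x ^+ 41) ^+ 2.
    by field.
  apply: ler_wpM2l; first by rewrite divr_ge0 ?mulr_ge0 ?exprn_ge0 // ltW.
  by apply: pw => //; rewrite mulr_ge0 // exprn_ge0 // ltW.
have h3 : g ^+ 2 <= 1.
  by rewrite -(ler_pM2r x0) mul1r; apply: le_trans h2 hD.
have h4 : g <= 1.
  by rewrite -(ler_pXn2r (n := 2)) ?expr1n // nnegrE.
have h5 : g ^+ sn <= g.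
  by have := ler_wiXn2l g0 h4 sn1; rewrite expr1.
have h6 : r ^+ 20 <= g ^+ 2.
  rewrite (_ : 20 = 10 * 2)%N // exprM; apply: pw; first by rewrite exprn_ge0.
  exact: le_trans h1 h5.
by apply: le_trans h6 _; rewrite ler_pdivlMr.
Qed.
Lemma ceil_nat (R : realType) (y : R) : 0 < y ->
  y <= (`|Num.ceil y|%N)%:R /\ (`|Num.ceil y|%N)%:R < y + 1 /\ (0 < `|Num.ceil y|%N)%N.
Proof.
move=> y0.
have z0 : 0 <= Num.ceil y by rewrite ceil_ge0; apply: lt_trans y0; rewrite ltrN10.
have e : (`|Num.ceil y|%N)%:R = (Num.ceil y)%:~R :> R by rewrite natr_absz ger0_norm.
have [h1 h2] := andP (ceil_itv y).
have h3 : (Num.ceil y)%:~R < y + 1 :> R.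
  by move: h1; rewrite intrD /= -ltrBlDr; rewrite (_ : (-1)%:~R = -1 :> R) //.
rewrite e; split => //; split => //.
by rewrite -(ltr0n R) e; apply: lt_le_trans h2.
Qed.

Lemma nat_aux (m n s K : nat) : (m <= n)%N -> (s <= n)%N -> (10 * K <= s)%N ->
  (m + K + K <= 2 * n)%N.
Proof. move=> *; lia. Qed.

Lemma nat_aux2 (k s : nat) : (k * 10 < s)%N -> (k <= s %/ 10)%N.
Proof. by move=> h; rewrite leq_divRL //; apply: ltnW. Qed.

Lemma key (R : realType) (eps : R) (n : nat) :
  0 < eps -> eps < 1 / 10 -> expR (1 : R) <= n%:R ->
  Dc (576`!)%:R eps <= n%:R ->
  0 <= 1 - probE eps n /\ (1 - probE eps n) ^+ 20 <= Dc (576`!)%:R eps / n%:R.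
Proof.
move=> e0 e1 hx hD.
have x1' : 1 <= (n%:R : R).
  by apply: le_trans hx; rewrite ltW // expR_gt1.
have hc := ln_pow_bound 575 x1'.
move: (576`!)%:R (ler0n R 576`!) hc hD => c c0 hc hD.
have x1 : 1 < (n%:R : R) by apply: lt_le_trans hx; rewrite expR_gt1.
have x0 : 0 < (n%:R : R) by apply: lt_trans x1.
have hn : (0 < n)%N by rewrite -(ltr0n R).
have lnx : 1 <= ln (n%:R : R).
  by rewrite -[X in X <= _](expRK (1 : R)) ler_ln ?posrE ?expR_gt0.
set L := ln (n%:R : R) ^+ 8.
have L1 : 1 <= L by apply: exprn_ege1.
have L0 : 0 < L by apply: lt_le_trans L1.
have xL0 : 0 < (n%:R : R) / L by rewrite divr_gt0.
have [hm1 [hm2 hm0]] := ceil_nat xL0.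
have [hs1 [hs2 hs0]] := ceil_nat (mulr_gt0 e0 x0).
rewrite /probE /=.
rewrite -/L in hm1 hm2 hm0.
set m := mval R n.
have em : m = `|Num.ceil ((n%:R : R) / L)|%N by [].
rewrite -em in hm1 hm2 hm0.
set s := Defs.sval eps n.
have es : s = `|Num.ceil (eps * (n%:R : R))|%N by [].
rewrite -es in hs1 hs2 hs0.
have hmL : n%:R <= m%:R * L by rewrite -ler_pdivrMr.
have hmn : (m <= n)%N.
  rewrite -ltnS -(ltr_nat R); apply: lt_le_trans hm2 _.
  rewrite -addn1 natrD lerD2r ler_pdivrMr // ler_peMr //; exact: ltW.
have hsn : (s <= n)%N.
  rewrite -ltnS -(ltr_nat R); apply: lt_le_trans hs2 _.
  rewrite -addn1 natrD lerD2r ger_pMl //; apply: ltW.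
  by apply: lt_trans e1 _; rewrite ltr_pdivrMr // mul1r ltr1n.
set K := (s %/ 10)%N.
have h10 : (10 * K <= s)%N by rewrite /K mulnC; exact: leq_trunc_div.
have hmK : (m + K + K <= 2 * n)%N := nat_aux hmn hsn h10.
have hK : forall k : nat, (k%:R < eps * s%:R)%R -> (k <= K)%N.
  move=> k hk.
  apply: nat_aux2; rewrite -(ltr_nat R) natrM.
  rewrite -ltr_pdivlMr; last by rewrite ltr0n.
  apply: lt_le_trans hk _.
  rewrite ler_pdivlMr ?ltr0n // mulrC mulrA ger_pMl; last by rewrite ltr0n.
  rewrite mulrC -ler_pdivlMr; last by rewrite ltr0n.
  exact: ltW.
have Hf := @fail_count R eps n m s K hn hm0 hK.
have HN := nat_main hm0 h10 hmK Hf.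
set F := #|[set p : {ffun 'I_n -> 'I_m} * {ffun 'I_n -> 'I_m} | ~~ eventE eps s p.1 p.2]| in HN.
set G := #|[pred p : {ffun 'I_n -> 'I_m} * {ffun 'I_n -> 'I_m} | eventE eps s p.1 p.2]|.
have eT : #|{: {ffun 'I_n -> 'I_m} * {ffun 'I_n -> 'I_m}}| = ((m ^ n) ^ 2)%N.
  by rewrite card_prod card_ffun !card_ord mulnn.
have eGF : (G + F)%N = ((m ^ n) ^ 2)%N.
  rewrite -eT -(cardC [pred p : {ffun 'I_n -> 'I_m} * {ffun 'I_n -> 'I_m} | eventE eps s p.1 p.2]).
  by congr (_ + _)%N; apply: eq_card => p; rewrite !inE.
rewrite eT.
set T := ((m ^ n) ^ 2)%N in eGF HN *.
have T0 : (0 < T)%N by rewrite /T !expn_gt0 hm0.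
have T0' : 0 < (T%:R : R) by rewrite ltr0n.
have er : 1 - G%:R / T%:R = F%:R / T%:R :> R.
  rewrite -eGF natrD; field; rewrite -natrD eGF; exact: lt0r_neq0.
rewrite er.
have r0 : 0 <= F%:R / (T%:R : R) by rewrite divr_ge0 // ltW.
split => //.
apply: (@real_key R c eps n%:R s%:R m%:R L _ s) => //.
- by rewrite ltr0n.
- by rewrite /L -exprM.
rewrite expr_div_n mulrAC ler_pdivrMr ?exprn_gt0 //.
  rewrite -?natrX -?natrM -?natrX -?natrM -?natrX -?natrM ler_nat; exact: HN.
Qed.

Local Open Scope classical_set_scope.
Import numFieldNormedType.Exports.

Theorem lemma4p2 (R : realType) (eps : R) :
  0 < eps -> eps < 1 / 10 ->
  probE eps n @[n --> \oo] --> (1 : R).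
Proof.
move=> e0 e1.
apply/cvgrPdist_le => d d0.
near=> n.
have hx : expR (1:R) <= n%:R by near: n; exact: nbhs_infty_ger.
have hD : Dc (576`!)%:R eps <= n%:R by near: n; exact: nbhs_infty_ger.
have hD2 : Dc (576`!)%:R eps / d ^+ 20 <= n%:R by near: n; exact: nbhs_infty_ger.
have [r0 hr] := key e0 e1 hx hD.
have x0 : 0 < (n%:R : R) by apply: lt_le_trans hx; rewrite expR_gt0.
clear hD.
move: (Dc (576`!)%:R eps) hr hD2 => D hr hD2.
rewrite ger0_norm //.
have d20 : 0 < d ^+ 20 by rewrite exprn_gt0.
have hd : d \in Num.nneg by rewrite nnegrE; exact: ltW.
have hr' : 1 - probE eps n \in Num.nneg by rewrite nnegrE.
rewrite -(ler_pXn2r (isT : (0 < 20)%N) hr' hd).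
apply: le_trans hr _.
rewrite ler_pdivrMr // mulrC -ler_pdivrMr //.
Unshelve. all: end_near.
Qed.
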